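(* Let $N\ge1$, let real channel gains $a_{s,r},a_{s,j},a_{r,j}$ ($j=1,\dots,N$) be fixed, and for $\mathbf{P}=(P_s,P_r)\in[0,\infty)^2$ set $\mathsf{SNR}_{s,r}=a_{s,r}^2P_s$, $\mathsf{SNR}_{s,j}=a_{s,j}^2P_s$, $\mathsf{SNR}_{r,j}=a_{r,j}^2P_r$, and $\mathbf{S}(\mathbf{P})=(\mathsf{SNR}_{s,r},\mathsf{SNR}_{s,1},\dots,\mathsf{SNR}_{s,N},\mathsf{SNR}_{r,1},\dots,\mathsf{SNR}_{r,N})$. With $\mathsf{C}(x)=\tfrac12\log(1+x)$, $f_j(\rho,\mathbf{S})=\mathsf{SNR}_{s,j}+\mathsf{SNR}_{r,j}+2\rho\sqrt{\mathsf{SNR}_{s,j}\mathsf{SNR}_{r,j}}$, $g^*_j(\rho,\mathbf{S})=(1-\rho^2)\mathsf{SNR}_{s,r}$ and $R_{DF}(\rho,\mathbf{S})=\min_{1\le j\le N}\min(\mathsf{C}(f_j(\rho,\mathbf{S})),\mathsf{C}(g^*_j(\rho,\mathbf{S})))$, the map $(t,\mathbf{P})\mapsto R_{DF}(\sqrt t,\mathbf{S}(\mathbf{P}))$ is quasi-concave on $[0,1]\times[0,\infty)^2$ (i.e., quasi-concave in $(\rho^2,\mathbf{P})$).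
   Context: Setting: real AWGN multicast relay channel with source $s$, relay $r$ and destinations $1,\dots,N$; $\rho\in[0,1]$ is the source–relay input correlation coefficient. A function $F$ on a convex set is quasi-concave if $F(\lambda x_1+(1-\lambda)x_2)\ge\min(F(x_1),F(x_2))$ for all $x_1,x_2$ and $\lambda\in[0,1]$. *)

(* Defs.v *)
From Stdlib Require Import Reals Lra.
Open Scope R_scope.

(* Gaussian capacity C(x) = 1/2 log(1+x) (natural log; base is irrelevant up to a positive factor). *)
Definition Ccap (x : R) : R := / 2 * ln (1 + x).

Fixpoint min_upto (F : nat -> R) (n : nat) : R :=
  match n with
  | O => F O
  | S m => Rmin (min_upto F m) (F (S m))
  end.

Definition min_1_to (N : nat) (F : nat -> R) : R := min_upto (fun k => F (S k)) (N - 1).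

(* SNR vector S = (snr_sr, snr_s 1..N, snr_r 1..N), destinations indexed 1..N *)
Definition f_j (rho snr_sj snr_rj : R) : R :=
  snr_sj + snr_rj + 2 * rho * sqrt (snr_sj * snr_rj).

Definition gstar_j (rho snr_sr : R) : R := (1 - rho ^ 2) * snr_sr.

Definition R_DF (N : nat) (rho snr_sr : R) (snr_s snr_r : nat -> R) : R :=
  min_1_to N (fun j => Rmin (Ccap (f_j rho (snr_s j) (snr_r j)))
                              (Ccap (gstar_j rho snr_sr))).

Definition F_DF (N : nat) (a_sr : R) (a_s a_r : nat -> R) (t Ps Pr : R) : R :=
  R_DF N (sqrt t) (a_sr ^ 2 * Ps) (fun j => a_s j ^ 2 * Ps) (fun j => a_r j ^ 2 * Pr).

Definition in_dom (t Ps Pr : R) : Prop := 0 <= t <= 1 /\ 0 <= Ps /\ 0 <= Pr.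

Definition quasi_concave3 (F : R -> R -> R -> R) : Prop :=
  forall t1 p1 q1 t2 p2 q2 lam,
    in_dom t1 p1 q1 -> in_dom t2 p2 q2 -> 0 <= lam <= 1 ->
    Rmin (F t1 p1 q1) (F t2 p2 q2) <=
      F (lam * t1 + (1 - lam) * t2) (lam * p1 + (1 - lam) * p2) (lam * q1 + (1 - lam) * q2).

(* Main.v *)
Require Import Defs.
From Stdlib Require Import Reals Lra Psatz.
Open Scope R_scope.

Lemma const_nonneg X Y : 0 <= X -> 0 <= Y -> 0 <= 1 - 3*X*Y + X*Y*(X+Y).
Proof.
  intros HX HY.
  set (rr := sqrt (X*Y)).
  assert (Hr : 0 <= rr) by apply sqrt_pos.
  assert (Hr2 : rr*rr = X*Y) by (apply sqrt_sqrt; nra).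
  assert (HS : 2*rr <= X+Y).
  { assert (H4 : (X+Y)^2 >= 4*(X*Y)) by (assert (0 <= (X-Y)^2) by apply pow2_ge_0; nra). rewrite <- Hr2 in H4.
    assert (H5: (X+Y)^2 >= (2*rr)^2) by nra.
    apply Rsqr_incr_0_var; [unfold Rsqr; nra | lra]. }
  assert (0 <= (1-rr)^2*(1+2*rr)) by (apply Rmult_le_pos; [apply pow2_ge_0 | lra]).
  assert (X*Y*(X+Y) >= rr*rr*(2*rr)) by (rewrite Hr2; apply Rle_ge; apply Rmult_le_compat_l; nra).
  rewrite <- Hr2. nra.
Qed.

Lemma inner X Y a b d : 0 <= X -> 0 <= Y -> 0 < a -> 0 < b -> 0 < d ->
  d*X*Y*(3*d+2*a+2*b - (d+2*a)*X - (d+2*b)*Y) <= (a+b+d-a*X-b*Y)^2.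
Proof.
  intros HX HY Ha Hb Hd.
  set (s := a*(1-X) + b*(1-Y)).
  assert (Heq : (a+b+d-a*X-b*Y)^2 - d*X*Y*(3*d+2*a+2*b - (d+2*a)*X - (d+2*b)*Y)
     = s^2 + 2*d*s*(1-X*Y) + d^2*(1 - 3*X*Y + X*Y*(X+Y))) by (unfold s; ring).
  assert (HC := const_nonneg X Y HX HY).
  destruct (Rle_dec ((1-X)*(1-Y)) 0) as [H|H].
  - assert (Heq2 : s^2 + 2*d*s*(1-X*Y) + d^2*(1 - 3*X*Y + X*Y*(X+Y))
       = (s + d*(1-X*Y))^2 - d^2*(X*Y)*((1-X)*(1-Y))) by ring.
    assert (0 <= d^2*(X*Y)*(-((1-X)*(1-Y)))).
    { apply Rmult_le_pos; [apply Rmult_le_pos; [apply pow2_ge_0 | nra] | lra]. }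
    cut (0 <= (a+b+d-a*X-b*Y)^2 - d*X*Y*(3*d+2*a+2*b - (d+2*a)*X - (d+2*b)*Y)); [lra|].
    rewrite Heq, Heq2. assert (0 <= (s + d*(1-X*Y))^2) by apply pow2_ge_0. lra.
  - assert (0 <= s*(1-X*Y)).
    { destruct (Rle_dec X 1).
      + assert (Y <= 1) by nra.
        apply Rmult_le_pos; unfold s; nra.
      + assert (1 <= Y) by nra.
        assert (s <= 0) by (unfold s; nra).
        assert (1 <= X*Y) by nra. nra. }
    assert (0 <= d^2*(1 - 3*X*Y + X*Y*(X+Y))) by (apply Rmult_le_pos; [apply pow2_ge_0|lra]).
    cut (0 <= (a+b+d-a*X-b*Y)^2 - d*X*Y*(3*d+2*a+2*b - (d+2*a)*X - (d+2*b)*Y)); [lra|].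
    rewrite Heq. assert (0 <= s^2) by apply pow2_ge_0.
    assert (0 <= d*(s*(1-X*Y))) by (apply Rmult_le_pos; lra). nra.
Qed.

Lemma tangent a b d x y : 0 < a -> 0 < b -> 0 < d -> 0 <= x -> 0 <= y ->
  d*x*y*(a*b*(3*d+2*a+2*b) - b*(d+2*a)*x - a*(d+2*b)*y) <= a^2*b^2*(a+b+d-x-y)^2.
Proof.
  intros Ha Hb Hd Hx Hy.
  set (X := x/a). set (Y := y/b).
  assert (Ex : x = a*X) by (unfold X; field; lra).
  assert (Ey : y = b*Y) by (unfold Y; field; lra).
  assert (HX : 0 <= X) by (unfold X; unfold Rdiv; apply Rmult_le_pos; [lra | apply Rlt_le, Rinv_0_lt_compat; lra]).
  assert (HY : 0 <= Y) by (unfold Y; unfold Rdiv; apply Rmult_le_pos; [lra | apply Rlt_le, Rinv_0_lt_compat; lra]).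
  rewrite Ex, Ey.
  assert (H := inner X Y a b d HX HY Ha Hb Hd).
  assert (0 <= a^2*b^2) by (apply Rmult_le_pos; apply pow2_ge_0).
  replace (d * (a * X) * (b * Y) * (a * b * (3 * d + 2 * a + 2 * b) - b * (d + 2 * a) * (a * X) - a * (d + 2 * b) * (b * Y)))
   with (a^2*b^2*(d*X*Y*(3*d+2*a+2*b - (d+2*a)*X - (d+2*b)*Y))) by ring.
  apply Rmult_le_compat_l; auto.
Qed.

Definition Lf a b d x y := a*b*(3*d+2*a+2*b) - b*(d+2*a)*x - a*(d+2*b)*y.

Lemma sq_ge (p q : R) : 0 <= p -> 0 <= q -> q^2 <= p^2 -> q <= p.
Proof. intros. destruct (Rle_dec q p); auto. nra. Qed.

Lemma point a b d t x y : 0 < a -> 0 < b -> 0 < d -> 0 <= t -> 0 <= x -> 0 <= y ->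
  a+b+d <= x + y + 2*sqrt t*sqrt (x*y) -> d * Lf a b d x y <= 4*a^2*b^2*t.
Proof.
  intros Ha Hb Hd Ht Hx Hy Hh. unfold Lf.
  assert (H0 : 0 <= 4*a^2*b^2*t).
  { repeat apply Rmult_le_pos; try lra; apply pow2_ge_0. }
  destruct (Rle_dec (a*b*(3*d+2*a+2*b) - b*(d+2*a)*x - a*(d+2*b)*y) 0) as [HL|HL].
  { assert (d * (a*b*(3*d+2*a+2*b) - b*(d+2*a)*x - a*(d+2*b)*y) <= 0).
    { assert (0 <= d * (- (a*b*(3*d+2*a+2*b) - b*(d+2*a)*x - a*(d+2*b)*y))) by (apply Rmult_le_pos; lra).
      lra. }
    lra. }
  destruct (Rle_dec (a+b+d) (x+y)) as [Hc|Hc].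
  { exfalso. apply HL. set (c := a+b+d).
    set (K := a*b*(3*d+2*a+2*b)).
    assert (E : c * (K - b*(d+2*a)*x - a*(d+2*b)*y)
       = x * (K - b*(d+2*a)*c) + y*(K - a*(d+2*b)*c) + K*(c - x - y)) by (unfold c; ring).
    assert (E1 : K - b*(d+2*a)*c = - (b*d*(b+d))) by (unfold K, c; ring).
    assert (E2 : K - a*(d+2*b)*c = - (a*d*(a+d))) by (unfold K, c; ring).
    assert (HK : 0 <= K) by (unfold K; repeat apply Rmult_le_pos; lra).
    assert (0 <= x * (b*d*(b+d))) by (repeat apply Rmult_le_pos; lra).
    assert (0 <= y * (a*d*(a+d))) by (repeat apply Rmult_le_pos; lra).
    assert (0 <= K * (x + y - c)) by (apply Rmult_le_pos; unfold c; lra).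
    assert (Hc0 : 0 < c) by (unfold c; lra).
    assert (c * (K - b*(d+2*a)*x - a*(d+2*b)*y) <= 0) by (rewrite E, E1, E2; nra).
    destruct (Rle_dec (K - b*(d+2*a)*x - a*(d+2*b)*y) 0); auto. nra. }
  set (D := a+b+d-x-y).
  assert (HD : 0 < D) by (unfold D; lra).
  assert (Hs : D <= 2*sqrt t*sqrt (x*y)) by (unfold D; lra).
  assert (Hxy : 0 <= x*y) by (apply Rmult_le_pos; lra).
  assert (Hsq : (2*sqrt t*sqrt (x*y))^2 = 4*t*(x*y)).
  { replace ((2*sqrt t*sqrt (x*y))^2) with (4*(sqrt t*sqrt t)*(sqrt (x*y)*sqrt (x*y))) by ring.
    rewrite !sqrt_sqrt; lra. }
  assert (H4 : D^2 <= 4*t*(x*y)).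
  { rewrite <- Hsq. apply pow_incr. lra. }
  assert (Hxy' : 0 < x*y).
  { destruct (Rle_dec (x*y) 0); [|lra]. assert (x*y = 0) by lra. nra. }
  assert (HT := tangent a b d x y Ha Hb Hd Hx Hy).
  fold D in HT.
  assert (a^2*b^2*D^2 <= a^2*b^2*(4*t*(x*y))).
  { apply Rmult_le_compat_l; auto. apply Rmult_le_pos; apply pow2_ge_0. }
  apply (Rmult_le_reg_r (x*y)); auto.
  replace (d * (a * b * (3 * d + 2 * a + 2 * b) - b * (d + 2 * a) * x - a * (d + 2 * b) * y) * (x * y))
    with (d * x * y * (a * b * (3 * d + 2 * a + 2 * b) - b * (d + 2 * a) * x - a * (d + 2 * b) * y)) by ring.
  nra.
Qed.

Definition hh t x y := x + y + 2*sqrt t*sqrt (x*y).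

Lemma hh_ge t x y : 0 <= x -> 0 <= y -> x + y <= hh t x y.
Proof.
  intros. unfold hh. assert (0 <= sqrt t) by apply sqrt_pos.
  assert (0 <= sqrt (x*y)) by apply sqrt_pos.
  assert (0 <= sqrt t * sqrt (x*y)) by (apply Rmult_le_pos; auto). lra.
Qed.

Lemma core t1 x1 y1 t2 x2 y2 l :
  0 <= t1 -> 0 <= x1 -> 0 <= y1 -> 0 <= t2 -> 0 <= x2 -> 0 <= y2 -> 0 <= l <= 1 ->
  Rmin (hh t1 x1 y1) (hh t2 x2 y2) <= hh (l*t1+(1-l)*t2) (l*x1+(1-l)*x2) (l*y1+(1-l)*y2).
Proof.
  intros Ht1 Hx1 Hy1 Ht2 Hx2 Hy2 Hl.
  assert (Hm1 := Rmin_l (hh t1 x1 y1) (hh t2 x2 y2)).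
  assert (Hm2 := Rmin_r (hh t1 x1 y1) (hh t2 x2 y2)).
  set (c := Rmin (hh t1 x1 y1) (hh t2 x2 y2)) in *.
  destruct (Req_dec l 0) as [E|E].
  { subst l. replace (0*t1+(1-0)*t2) with t2 by ring. replace (0*x1+(1-0)*x2) with x2 by ring.
    replace (0*y1+(1-0)*y2) with y2 by ring. auto. }
  destruct (Req_dec l 1) as [E'|E'].
  { subst l. replace (1*t1+(1-1)*t2) with t1 by ring. replace (1*x1+(1-1)*x2) with x1 by ring.
    replace (1*y1+(1-1)*y2) with y1 by ring. auto. }
  assert (Hl' : 0 < l < 1) by lra.
  set (a := l*x1+(1-l)*x2). set (b := l*y1+(1-l)*y2). set (tm := l*t1+(1-l)*t2).
  assert (Ha0 : 0 <= a) by (unfold a; nra). assert (Hb0 : 0 <= b) by (unfold b; nra).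
  assert (Htm : 0 <= tm) by (unfold tm; nra).
  destruct (Rle_dec c (a+b)) as [Hc|Hc].
  { assert (H := hh_ge tm a b Ha0 Hb0). lra. }
  assert (Ha : 0 < a).
  { destruct (Rle_dec a 0); [|lra]. exfalso.
    assert (x1 = 0) by (unfold a in *; nra). assert (x2 = 0) by (unfold a in *; nra).
    subst x1 x2. unfold hh in Hm1, Hm2. rewrite !Rmult_0_l, sqrt_0 in Hm1, Hm2.
    unfold b, a in Hc. nra. }
  assert (Hb : 0 < b).
  { destruct (Rle_dec b 0); [|lra]. exfalso.
    assert (y1 = 0) by (unfold b in *; nra). assert (y2 = 0) by (unfold b in *; nra).
    subst y1 y2. unfold hh in Hm1, Hm2. rewrite !Rmult_0_r, sqrt_0 in Hm1, Hm2.
    unfold b, a in Hc. nra. }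
  set (d := c - a - b).
  assert (Hd : 0 < d) by (unfold d; lra).
  assert (P1 := point a b d t1 x1 y1 Ha Hb Hd Ht1 Hx1 Hy1 ltac:(unfold d; unfold hh in Hm1; lra)).
  assert (P2 := point a b d t2 x2 y2 Ha Hb Hd Ht2 Hx2 Hy2 ltac:(unfold d; unfold hh in Hm2; lra)).
  assert (Hcomb : l * (d * Lf a b d x1 y1) + (1-l) * (d * Lf a b d x2 y2) <= l*(4*a^2*b^2*t1) + (1-l)*(4*a^2*b^2*t2)).
  { apply Rplus_le_compat; apply Rmult_le_compat_l; lra. }
  assert (Eq1 : l * (d * Lf a b d x1 y1) + (1-l) * (d * Lf a b d x2 y2) = d*d*a*b).
  { unfold Lf. replace (l * (d * (a * b * (3 * d + 2 * a + 2 * b) - b * (d + 2 * a) * x1 - a * (d + 2 * b) * y1)) +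
      (1 - l) * (d * (a * b * (3 * d + 2 * a + 2 * b) - b * (d + 2 * a) * x2 - a * (d + 2 * b) * y2)))
    with (d * (a * b * (3 * d + 2 * a + 2 * b) - b * (d + 2 * a) * (l*x1+(1-l)*x2) - a * (d + 2 * b) * (l*y1+(1-l)*y2))) by ring.
    fold a b. ring. }
  assert (Eq2 : l*(4*a^2*b^2*t1) + (1-l)*(4*a^2*b^2*t2) = (a*b)*(4*a*b*tm)) by (unfold tm; ring).
  rewrite Eq1, Eq2 in Hcomb.
  assert (Hab : 0 < a*b) by (apply Rmult_lt_0_compat; auto).
  assert (Hk : d*d <= 4*a*b*tm).
  { apply (Rmult_le_reg_l (a*b)); auto. replace (a*b*(d*d)) with (d*d*a*b) by ring. auto. }
  assert (Hsq : (2*sqrt tm*sqrt (a*b))^2 = 4*a*b*tm).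
  { replace ((2*sqrt tm*sqrt (a*b))^2) with (4*(sqrt tm*sqrt tm)*(sqrt (a*b)*sqrt (a*b))) by ring.
    rewrite !sqrt_sqrt; lra. }
  assert (d <= 2*sqrt tm*sqrt (a*b)).
  { apply sq_ge; [| lra |].
    - assert (0 <= sqrt tm) by apply sqrt_pos. assert (0 <= sqrt (a*b)) by apply sqrt_pos.
      assert (0 <= sqrt tm * sqrt (a*b)) by (apply Rmult_le_pos; auto). lra.
    - rewrite Hsq. lra. }
  unfold hh. unfold d in *. lra.
Qed.


Lemma prod_qc u1 v1 u2 v2 l : 0 <= u1 -> 0 <= v1 -> 0 <= u2 -> 0 <= v2 -> 0 <= l <= 1 ->
  Rmin (u1*v1) (u2*v2) <= (l*u1+(1-l)*u2)*(l*v1+(1-l)*v2).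
Proof.
  intros H1 H2 H3 H4 Hl.
  assert (Hm1 := Rmin_l (u1*v1) (u2*v2)). assert (Hm2 := Rmin_r (u1*v1) (u2*v2)).
  set (m := Rmin (u1*v1) (u2*v2)) in *.
  assert (Hm0 : 0 <= m) by (unfold m; apply Rmin_glb; apply Rmult_le_pos; auto).
  assert (Hp : m*m <= (u1*v2)*(u2*v1)).
  { replace ((u1*v2)*(u2*v1)) with ((u1*v1)*(u2*v2)) by ring.
    apply Rmult_le_compat; auto. }
  assert (Hs : 2*m <= u1*v2 + u2*v1).
  { assert (0 <= u1*v2) by (apply Rmult_le_pos; auto).
    assert (0 <= u2*v1) by (apply Rmult_le_pos; auto).
    apply sq_ge; [lra|lra|].
    assert (0 <= (u1*v2 - u2*v1)^2) by apply pow2_ge_0. nra. }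
  replace ((l*u1+(1-l)*u2)*(l*v1+(1-l)*v2)) with
    (l*l*(u1*v1) + (1-l)*(1-l)*(u2*v2) + l*(1-l)*(u1*v2+u2*v1)) by ring.
  assert (l*l*m <= l*l*(u1*v1)) by (apply Rmult_le_compat_l; nra).
  assert ((1-l)*(1-l)*m <= (1-l)*(1-l)*(u2*v2)) by (apply Rmult_le_compat_l; nra).
  assert (l*(1-l)*(2*m) <= l*(1-l)*(u1*v2+u2*v1)) by (apply Rmult_le_compat_l; nra).
  nra.
Qed.

Lemma Ccap_mono x y : 0 <= x -> x <= y -> Ccap x <= Ccap y.
Proof.
  intros. unfold Ccap. apply Rmult_le_compat_l; [lra|].
  destruct (Req_dec x y) as [->|Hne]; [lra|].
  left. apply ln_increasing; lra.
Qed.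

Lemma Ccap_qc A1 A2 B : 0 <= A1 -> 0 <= A2 -> Rmin A1 A2 <= B -> Rmin (Ccap A1) (Ccap A2) <= Ccap B.
Proof.
  intros. unfold Rmin in *. destruct (Rle_dec A1 A2); destruct (Rle_dec (Ccap A1) (Ccap A2)).
  - apply Ccap_mono; lra.
  - assert (Ccap A1 <= Ccap B) by (apply Ccap_mono; lra). lra.
  - assert (Ccap A2 <= Ccap B) by (apply Ccap_mono; lra). lra.
  - apply Ccap_mono; lra.
Qed.

Lemma min2 p1 p2 pm q1 q2 qm : Rmin p1 p2 <= pm -> Rmin q1 q2 <= qm ->
  Rmin (Rmin p1 q1) (Rmin p2 q2) <= Rmin pm qm.
Proof. unfold Rmin. intros; repeat destruct Rle_dec; lra. Qed.

Lemma min_upto_qc F1 F2 Fm n : (forall k, Rmin (F1 k) (F2 k) <= Fm k) ->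
  Rmin (min_upto F1 n) (min_upto F2 n) <= min_upto Fm n.
Proof.
  intros H. induction n as [|n IH]; simpl; auto. apply min2; auto.
Qed.

Theorem corollary2 (N : nat) (a_sr : R) (a_s a_r : nat -> R) :
  (1 <= N)%nat -> quasi_concave3 (F_DF N a_sr a_s a_r).
Proof.
  intros _ t1 p1 q1 t2 p2 q2 l [[Ht1 Ht1'] [Hp1 Hq1]] [[Ht2 Ht2'] [Hp2 Hq2]] Hl.
  unfold F_DF, R_DF, min_1_to. apply min_upto_qc. intro k.
  assert (sq : forall t, 0 <= t -> sqrt t ^ 2 = t).
  { intros t Ht. simpl. rewrite Rmult_1_r. apply sqrt_sqrt; auto. }
  assert (Htm : 0 <= l*t1+(1-l)*t2) by nra.
  unfold gstar_j. rewrite !sq by auto.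
  assert (Hsq : forall z, 0 <= z^2) by (intro; apply pow2_ge_0).
  set (as_ := a_s (S k)). set (ar := a_r (S k)).
  apply min2; apply Ccap_qc.
  - change (0 <= hh t1 (as_^2*p1) (ar^2*q1)).
    assert (H := hh_ge t1 (as_^2*p1) (ar^2*q1) ltac:(apply Rmult_le_pos; auto) ltac:(apply Rmult_le_pos; auto)).
    assert (0 <= as_^2*p1) by (apply Rmult_le_pos; auto). assert (0 <= ar^2*q1) by (apply Rmult_le_pos; auto). lra.
  - change (0 <= hh t2 (as_^2*p2) (ar^2*q2)).
    assert (H := hh_ge t2 (as_^2*p2) (ar^2*q2) ltac:(apply Rmult_le_pos; auto) ltac:(apply Rmult_le_pos; auto)).
    assert (0 <= as_^2*p2) by (apply Rmult_le_pos; auto). assert (0 <= ar^2*q2) by (apply Rmult_le_pos; auto). lra.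
  - change (Rmin (hh t1 (as_^2*p1) (ar^2*q1)) (hh t2 (as_^2*p2) (ar^2*q2)) <=
       hh (l*t1+(1-l)*t2) (as_^2*(l*p1+(1-l)*p2)) (ar^2*(l*q1+(1-l)*q2))).
    replace (as_^2*(l*p1+(1-l)*p2)) with (l*(as_^2*p1)+(1-l)*(as_^2*p2)) by ring.
    replace (ar^2*(l*q1+(1-l)*q2)) with (l*(ar^2*q1)+(1-l)*(ar^2*q2)) by ring.
    apply core; auto; apply Rmult_le_pos; auto.
  - apply Rmult_le_pos; [lra | apply Rmult_le_pos; auto].
  - apply Rmult_le_pos; [lra | apply Rmult_le_pos; auto].
  - replace (a_sr^2*(l*p1+(1-l)*p2)) with (l*(a_sr^2*p1)+(1-l)*(a_sr^2*p2)) by ring.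
    replace (1 - (l*t1+(1-l)*t2)) with (l*(1-t1)+(1-l)*(1-t2)) by ring.
    apply prod_qc; auto; try lra; apply Rmult_le_pos; auto.
Qed.
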